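(* Let $\mathcal K$ be a quantum channel on $n\times n$ matrices described by Kraus operators $K_1,\dots,K_d\in\mathbb C^{n\times n}$ (with $\mathcal K(\rho)=\sum_j K_j\rho K_j^\dagger$, $\sum_j K_j^\dagger K_j=I_n$). Then $$\cos^{-1}\left[\frac1n\sqrt{\sum_{j=1}^d\lvert\mathrm{Tr}(K_j)\rvert^2}\right]\le\lVert\mathcal K\rVert,$$ with $\cos^{-1}$ taking values in $[0,\pi]$.
   Context: For a unitary matrix $U$ of size $r$ with eigenvalues $e^{i\theta_j}$, $\theta_j\in(-\pi,\pi]$, its time-energy cost is $\lVert U\rVert=\max_{1\le j\le r}|\theta_j|$. For a quantum channel $\mathcal K$ acting on an $n$-dimensional system $A$, its time-energy cost is $\lVert\mathcal K\rVert=\inf_U\lVert U\rVert$, where the infimum is over all finite-dimensional ancilla systems $B$ with a fixed standard state $|0\rangle_B$ and all unitaries $U_{BA}$ on $B\otimes A$ such that $\mathcal K(\rho)=\mathrm{Tr}_B[U_{BA}(|0\rangle_B\langle 0|\otimes\rho_A)U_{BA}^\dagger]$ for all density matrices $\rho$ on $A$. *)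

(* Defs.v *)
From HB Require Import structures.
From mathcomp Require Import all_boot all_order all_algebra.
From mathcomp Require Import all_classical all_reals all_analysis.
From mathcomp Require Import complex mxtens.
Set Implicit Arguments. Unset Strict Implicit. Unset Printing Implicit Defensive.
Import Order.TTheory GRing.Theory Num.Theory.
Local Open Scope ring_scope.
Local Open Scope complex_scope.

Section QDefs.
Variable R : realType.
Local Notation C := R[i].

Definition adjmx {p q : nat} (A : 'M[C]_(p, q)) : 'M[C]_(q, p) :=
  (map_mx (@conjc R) A)^T.

Definition unitary_mx (r : nat) (U : 'M[C]_r) : Prop :=
  adjmx U *m U = 1%:M /\ U *m adjmx U = 1%:M.

Definition density_mx (n : nat) (rho : 'M[C]_n) : Prop :=
  [/\ adjmx rho = rho,
      forall v : 'cV[C]_n, 0 <= (adjmx v *m rho *m v) 0 0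
    & \tr rho = 1].

Definition expi (t : R) : C := (cos t) +i* (sin t).

Definition unitary_cost (r : nat) (U : 'M[C]_r) : \bar R :=
  ereal_sup [set (`|t|)%:E | t in
     [set t : R | - pi < t <= pi /\ eigenvalue U (expi t)]]%classic.

Definition kraus_channel (n d : nat) (K : 'I_d -> 'M[C]_n) (rho : 'M[C]_n)
  : 'M[C]_n := \sum_(j < d) K j *m rho *m adjmx (K j).

(* partial trace over the ancilla B (first tensor factor, dimension m) *)
Definition ptrace_B (m n : nat) (M : 'M[C]_(m * n)) : 'M[C]_n :=
  \matrix_(a, a') \sum_(b < m) M (mxtens_index (b, a)) (mxtens_index (b, a')).

(* U_{BA} on B (x) A, ancilla B of dimension m.+1 with standard state |0>,
   realizes the channel Phi *)
Definition dilates (n m : nat) (Phi : 'M[C]_n -> 'M[C]_n)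
  (U : 'M[C]_(m.+1 * n)) : Prop :=
  unitary_mx U /\
  forall rho : 'M[C]_n, density_mx rho ->
    Phi rho = ptrace_B (U *m ((delta_mx ord0 ord0 : 'M[C]_m.+1) *t rho)
                          *m adjmx U).

Definition channel_cost (n : nat) (Phi : 'M[C]_n -> 'M[C]_n) : \bar R :=
  ereal_inf [set x : \bar R | exists (m : nat) (U : 'M[C]_(m.+1 * n)),
                 dilates Phi U /\ x = unitary_cost U]%classic.
End QDefs.

(* Main.v *)
Require Import Defs.
From HB Require Import structures.
From mathcomp Require Import all_boot all_order all_algebra.
From mathcomp Require Import all_classical all_reals all_analysis.
From mathcomp Require Import complex mxtens.
From mathcomp Require Import ring lra spectral.
Import Order.TTheory GRing.Theory Num.Theory.
Local Open Scope ring_scope.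

Section Sec1.
Local Open Scope complex_scope.
Variable R : realType.
Local Notation C := R[i].

Lemma adjmxE p q (A : 'M[C]_(p,q)) i j : adjmx A i j = conjc (A j i).
Proof. by rewrite !mxE. Qed.

Lemma adjmxK p q (A : 'M[C]_(p,q)) : adjmx (adjmx A) = A.
Proof. by apply/matrixP => i j; rewrite !adjmxE conjcK. Qed.

Lemma adjmxM p q r (A : 'M[C]_(p,q)) (B : 'M[C]_(q,r)) :
  adjmx (A *m B) = adjmx B *m adjmx A.
Proof. by rewrite /adjmx map_mxM trmx_mul. Qed.

Lemma adjmxD p q (A B : 'M[C]_(p,q)) : adjmx (A + B) = adjmx A + adjmx B.
Proof. by apply/matrixP => i j; rewrite !mxE rmorphD. Qed.

Lemma adjmxZ p q c (A : 'M[C]_(p,q)) : adjmx (c *: A) = conjc c *: adjmx A.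
Proof. by apply/matrixP => i j; rewrite !mxE rmorphM. Qed.

Lemma mx11E (A B : 'M[C]_1) : (A *m B) 0 0 = A 0 0 * B 0 0.
Proof. by rewrite mxE big_ord1. Qed.

Lemma density_of n (k : R) (v : 'cV[C]_n) : 0 < k ->
  adjmx v *m v = (k%:C)%:M -> density_mx ((k^-1)%:C *: (v *m adjmx v)).
Proof.
move=> k0 hv; split.
- rewrite adjmxZ adjmxM adjmxK; congr (_ *: _).
  by apply/eqP; rewrite eq_complex /= oppr0 !eqxx.
- move=> x; rewrite -scalemxAr -scalemxAl mxE.
  have -> : adjmx x *m (v *m adjmx v) *m x = (adjmx x *m v) *m (adjmx v *m x) by rewrite !mulmxA.
  rewrite [X in _ * X]mxE big_ord1.
  have -> : (adjmx x *m v) = adjmx (adjmx v *m x) by rewrite adjmxM adjmxK.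
  rewrite adjmxE mulr_ge0 //; first by rewrite ler0c invr_ge0 ltW.
  by rewrite mulrC mulcJ_ge0.
- rewrite mxtraceZ mxtrace_mulC hv mxtrace_scalar -rmorphM /=.
  by rewrite mulVf ?gt_eqF.
Qed.

End Sec1.

Section Sec2.
Local Open Scope complex_scope.
Variable R : realType.
Local Notation C := R[i].

Lemma adj_delta p q (i : 'I_p) (j : 'I_q) :
  adjmx (delta_mx i j : 'M[C]_(p,q)) = delta_mx j i.
Proof. by apply/matrixP => x y; rewrite !mxE rmorph_nat andbC. Qed.

Lemma delta11 : (delta_mx 0 0 : 'M[C]_1) = 1%:M.
Proof. by apply/matrixP => x y; rewrite !mxE !ord1. Qed.

Lemma agree n (f g : 'M[C]_n -> 'M[C]_n) :
  (forall A B, f (A + B) = f A + f B) -> (forall c A, f (c *: A) = c *: f A) ->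
  (forall A B, g (A + B) = g A + g B) -> (forall c A, g (c *: A) = c *: g A) ->
  (forall rho, density_mx rho -> f rho = g rho) ->
  forall a b, f (delta_mx a b) = g (delta_mx a b).
Proof.
move=> fD fZ gD gZ fg.
pose h A := f A - g A.
have hD A B : h (A + B) = h A + h B.
  by rewrite /h fD gD addrACA opprD.
have hZ c A : h (c *: A) = c *: h A by rewrite /h fZ gZ scalerBr.
have h0 rho : density_mx rho -> h rho = 0 by move=> /fg; rewrite /h => ->; rewrite subrr.
suff : forall a b, h (delta_mx a b) = 0 by move=> H a b; apply/eqP; rewrite -subr_eq0; apply/eqP; exact: H.
pose e (a : 'I_n) := (delta_mx a 0 : 'cV[C]_n).
have ee a b : e a *m adjmx (e b) = delta_mx a b by rewrite adj_delta mul_delta_mx.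
have hdiag a : h (delta_mx a a) = 0.
  apply: h0; rewrite -ee -[e a *m _]scale1r.
  have -> : (1 : C) = (1^-1)%:C by rewrite invr1.
  apply: density_of; first exact: ltr01.
  by rewrite adj_delta mul_delta_mx delta11.
move=> a b; have [-> //|ab] := eqVneq a b.
pose v1 := e a + e b; pose v2 := e a + 'i *: e b.
have ba : (b == a) = false by rewrite eq_sym (negbTE ab).
have hv1 : adjmx v1 *m v1 = ((2:R)%:C)%:M.
  rewrite adjmxD !adj_delta mulmxDl !mulmxDr !mul_delta_mx.
  rewrite !mul_delta_mx_cond (negbTE ab) ba !mulr0n addr0 add0r delta11.
  by apply/matrixP => x y; rewrite !mxE !ord1 /= mulr1n; apply/eqP; rewrite eq_complex /= addr0 !eqxx.

have hv2 : adjmx v2 *m v2 = ((2:R)%:C)%:M.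
  rewrite adjmxD adjmxZ !adj_delta mulmxDl !mulmxDr -!scalemxAl -!scalemxAr.
  rewrite !mul_delta_mx_cond (negbTE ab) ba !mulr0n !scaler0 addr0 add0r delta11 scalerA.
  apply/matrixP => x y; rewrite !eqxx !mulr1n !mxE !ord1 /= !mulr1n !mulr1.
  by apply/eqP; rewrite eq_complex /=; apply/andP; split; apply/eqP; ring.
have P1 : v1 *m adjmx v1 = delta_mx a a + delta_mx a b + (delta_mx b a + delta_mx b b).
  by rewrite adjmxD !adj_delta mulmxDl !mulmxDr !mul_delta_mx.
have P2 : v2 *m adjmx v2 = delta_mx a a + conjc 'i *: delta_mx a b
    + ('i *: delta_mx b a + ('i * conjc 'i) *: delta_mx b b).
  rewrite adjmxD adjmxZ !adj_delta mulmxDl !mulmxDr -!scalemxAl -!scalemxAr.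
  by rewrite !mul_delta_mx scalerA.
have hP (v : 'cV[C]_n) : adjmx v *m v = ((2:R)%:C)%:M -> h (v *m adjmx v) = 0.
  move=> hv; have := h0 _ (@density_of R n 2 v (ltr0Sn _ 1) hv).
  rewrite hZ => /eqP; rewrite scaler_eq0 => /orP[|/eqP//].
  by rewrite eq_complex /= eqxx andbT invr_eq0 pnatr_eq0.
have E1 := hP _ hv1; have E2 := hP _ hv2.
rewrite P1 !hD !hdiag add0r addr0 in E1.
rewrite P2 !hD !hZ !hdiag scaler0 add0r addr0 in E2.
move/eqP: E1; rewrite addrC addr_eq0 => /eqP E1.
rewrite E1 scalerN -scalerBl in E2.
move/eqP: E2; rewrite scaler_eq0 => /orP[|/eqP//].
rewrite eq_complex /= => /andP[_ /eqP Hi]; exfalso; move: Hi; lra.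
Qed.

End Sec2.

Section Sec3.
Local Open Scope complex_scope.
Variable R : realType.
Local Notation C := R[i].

Lemma mul_delta_entry r s (A B : 'M[C]_(r,s)) p q x y :
  (A *m delta_mx p q *m adjmx B) x y = A x p * conjc (B y q).
Proof.
rewrite -(mul_delta_mx (0 : 'I_1)) mulmxA -colE -mulmxA -rowE mxE big_ord1.
by rewrite !mxE.
Qed.

Lemma kraus_D n d (K : 'I_d -> 'M[C]_n) A B :
  kraus_channel K (A + B) = kraus_channel K A + kraus_channel K B.
Proof. by rewrite /kraus_channel -big_split; apply: eq_bigr => j _; rewrite mulmxDr mulmxDl. Qed.

Lemma kraus_Z n d (K : 'I_d -> 'M[C]_n) c A :
  kraus_channel K (c *: A) = c *: kraus_channel K A.
Proof. by rewrite /kraus_channel scaler_sumr; apply: eq_bigr => j _; rewrite -scalemxAr -scalemxAl. Qed.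

Lemma tensD m p q (E : 'M[C]_(m,p)) (A B : 'M[C]_q) : E *t (A + B) = E *t A + E *t B.
Proof.
by apply/matrixP => i j; rewrite !mxE mulrDr.
Qed.

Lemma tensZ m p q (E : 'M[C]_(m,p)) c (A : 'M[C]_q) : E *t (c *: A) = c *: (E *t A).
Proof.
by apply/matrixP => i j; rewrite !mxE mulrCA.
Qed.

Lemma ptraceD m n (A B : 'M[C]_(m * n)) : ptrace_B (A + B) = ptrace_B A + ptrace_B B.
Proof. by apply/matrixP => i j; rewrite !mxE -big_split; apply: eq_bigr => b _; rewrite mxE. Qed.

Lemma ptraceZ m n c (A : 'M[C]_(m * n)) : ptrace_B (c *: A) = c *: ptrace_B A.
Proof. by apply/matrixP => i j; rewrite !mxE mulr_sumr; apply: eq_bigr => b _; rewrite mxE. Qed.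

Lemma tens_delta m n (a b : 'I_n) :
  (delta_mx 0 0 : 'M[C]_m.+1) *t (delta_mx a b : 'M[C]_n) =
  delta_mx (mxtens_index (0, a)) (mxtens_index (0, b)).
Proof.
apply/matrixP => i j; case: (mxtens_indexP i) => i1 i2; case: (mxtens_indexP j) => j1 j2.
rewrite tensmxE !mxE !(can_eq (@mxtens_indexK _ _)) !xpair_eqE.
by do ! case: (_ == _) => //=; rewrite ?mulr1 ?mulr0.
Qed.

End Sec3.

Section Sec4.
Local Open Scope complex_scope.
Variable R : realType.
Local Notation C := R[i].

Lemma sum_conj I J (rI : seq I) (rJ : seq J) (x : I -> C) (y : J -> C) :
  \sum_(a <- rI) \sum_(b <- rJ) x a * conjc (y b) =
  (\sum_(a <- rI) x a) * conjc (\sum_(b <- rJ) y b).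
Proof.
rewrite rmorph_sum mulr_suml; apply: eq_bigr => a _.
by rewrite mulr_sumr.
Qed.

Lemma trace_identity n m d (K : 'I_d -> 'M[C]_n) (U : 'M[C]_(m.+1 * n)) :
  dilates (kraus_channel K) U ->
  \sum_j \tr (K j) * conjc (\tr (K j)) =
  \sum_(c < m.+1) (\sum_a U (mxtens_index (c, a)) (mxtens_index (0, a))) *
     conjc (\sum_a U (mxtens_index (c, a)) (mxtens_index (0, a))).
Proof.
move=> [_ hdil].
pose g (rho : 'M[C]_n) := ptrace_B (U *m ((delta_mx 0 0 : 'M[C]_m.+1) *t rho) *m adjmx U).
have hag := @agree R n (kraus_channel K) g (@kraus_D _ _ _ K) (@kraus_Z _ _ _ K).
have /hag {}hag : forall A B, g (A + B) = g A + g B.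
  by move=> A B; rewrite /g tensD mulmxDr mulmxDl ptraceD.
have /hag {}hag : forall c A, g (c *: A) = c *: g A.
  by move=> c A; rewrite /g tensZ -scalemxAr -scalemxAl ptraceZ.
have /hag {}hag : forall rho, density_mx rho -> kraus_channel K rho = g rho by [].
transitivity (\sum_j \sum_a \sum_b K j a a * conjc (K j b b)).
  by under [RHS]eq_bigr => j _ do rewrite sum_conj.
transitivity (\sum_a \sum_b kraus_channel K (delta_mx a b) a b).
  rewrite exchange_big /=; apply: eq_bigr => a _.
  rewrite exchange_big /=; apply: eq_bigr => b _.
  by rewrite /kraus_channel summxE; apply: eq_bigr => j _; rewrite mul_delta_entry.
transitivity (\sum_a \sum_b \sum_(c < m.+1) U (mxtens_index (c, a)) (mxtens_index (0, a)) *
     conjc (U (mxtens_index (c, b)) (mxtens_index (0, b)))).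
  apply: eq_bigr => a _; apply: eq_bigr => b _.
  rewrite hag /g tens_delta mxE; apply: eq_bigr => c _.
  by rewrite mul_delta_entry.
under eq_bigr => a _ do rewrite exchange_big /=.
rewrite [LHS]exchange_big /=; apply: eq_bigr => c _.
by rewrite sum_conj.
Qed.

End Sec4.

Section Sec5.
Local Open Scope complex_scope.
Variable R : realType.
Local Notation C := R[i].

Lemma arg_exists (a b : R) : a ^+ 2 + b ^+ 2 = 1 ->
  exists t, [/\ - pi < t <= pi, cos t = a & sin t = b].
Proof.
move=> hab.
have ha : -1 <= a <= 1.
  by apply/andP; split; nra.
have hs : Num.sqrt (1 - a ^+ 2) = `|b| by rewrite -hab addrAC subrr add0r sqrtr_sqr.
have [hb|hb] := leP 0 b.
- exists (acos a); split.
  + rewrite acos_lepi // andbT; apply: lt_le_trans (acos_ge0 ha).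
    by rewrite oppr_lt0 pi_gt0.
  + by rewrite acosK // in_itv.
  + by rewrite sin_acos // hs ger0_norm.
- exists (- acos a); split.
  + have h0 := acos_ge0 ha; have hp := @pi_gt0 R.
    suff : acos a < pi by move=> h1; apply/andP; split; lra.
    apply: acos_ltpi.
    case/andP: ha => ha1 ->; rewrite andbT lt_neqAle ha1 andbT.
    apply/eqP => ha2; move: hab hb; rewrite -ha2 sqrrN expr1n; nra.
  + by rewrite cosN acosK // in_itv.
  + by rewrite sinN sin_acos // hs ltr0_norm // opprK.
Qed.

Lemma ReD (x y : C) : complex.Re (x + y) = complex.Re x + complex.Re y.
Proof. by case: x => a b; case: y => c d. Qed.

Lemma Re_sum I (r : seq I) (F : I -> C) : complex.Re (\sum_(i <- r) F i) = \sum_(i <- r) complex.Re (F i).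
Proof. by apply: (big_morph _ ReD). Qed.

Lemma Re_conj_mul (v l : C) :
  complex.Re (conjc v * l * v) = complex.Re l * ((complex.Re v) ^+ 2 + (complex.Im v) ^+ 2).
Proof. by case: v => a b; case: l => c e /=; ring. Qed.

Lemma Re_conj_mul1 (v : C) : complex.Re (conjc v * v) = (complex.Re v) ^+ 2 + (complex.Im v) ^+ 2.
Proof. by case: v => a b /=; ring. Qed.

Lemma argmin_ex N (F : 'I_N -> R) (i0 : 'I_N) : exists k0, forall k, F k0 <= F k.
Proof.
have [k0 _ Hk] := @arg_minP _ _ _ i0 xpredT F isT.
by exists k0 => k; apply: Hk.
Qed.

End Sec5.

Section Sec6.
Local Open Scope complex_scope.
Variable R : realType.
Local Notation C := R[i].
Local Notation nz v := ((complex.Re v) ^+ 2 + (complex.Im v) ^+ 2).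

Lemma adjE p q (A : 'M[C]_(p,q)) : adjmx A = (A ^t*)%sesqui.
Proof. by rewrite /adjmx map_trmx. Qed.

Lemma spectral_bound N n (U : 'M[C]_N) (f : 'I_n -> 'I_N) : (0 < n)%N -> unitary_mx U ->
  exists t, (-pi < t <= pi /\ eigenvalue U (expi t)) /\
     n%:R * cos t <= complex.Re (\sum_a U (f a) (f a)).
Proof.
move=> n0 [hUl hUr].
have Unorm : U \is normalmx by apply/normalmxP; rewrite -!adjE; exact (etrans hUr (esym hUl)).
pose V := spectralmx U; pose d := spectral_diag U.
have hV : V \is unitarymx := spectral_unitarymx U.
have VV : V *m adjmx V = 1%:M by rewrite adjE; apply/unitarymxP.
have VV' : adjmx V *m V = 1%:M.
  have := hV; rewrite -trmxC_unitary => /unitarymxP; rewrite trmxCK adjE; exact.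
have hU : U = adjmx V *m diag_mx d *m V.
  by move/orthomx_spectralP: Unorm; rewrite invmx_unitary // adjE.
have Uii i : U i i = \sum_k conjc (V k i) * d 0 k * V k i.
  rewrite [in LHS]hU mxE; apply: eq_bigr => k _.
  by rewrite mul_mx_diag !mxE.
have [k0 hk0] := @argmin_ex R _ (fun k => complex.Re (d 0 k)) (f (Ordinal n0)).
have colnorm i : \sum_k nz (V k i) = 1.
  have := congr1 (fun M : 'M[C]_N => complex.Re (M i i)) VV'; rewrite /= mxE !mxE Re_sum eqxx /= => <-.
  by apply: eq_bigr => k _; rewrite !mxE Re_conj_mul1.
set l := d 0 k0.
have hbound : n%:R * complex.Re l <= complex.Re (\sum_a U (f a) (f a)).
  rewrite Re_sum.
  under eq_bigr => a _ do rewrite Uii Re_sum.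
  rewrite -[n in n%:R]card_ord -sum1_card natr_sum mulr_suml.
  apply: ler_sum => a _; rewrite mul1r -[X in X <= _]mulr1 -(colnorm (f a)) mulr_sumr.
  apply: ler_sum => k _; rewrite Re_conj_mul; apply: ler_wpM2r; first by rewrite addr_ge0 // sqr_ge0.
  exact: hk0.
pose v := row k0 V.
have VU : V *m U = diag_mx d *m V by rewrite [in LHS]hU !mulmxA VV mul1mx.
have vU : v *m U = l *: v.
  by rewrite /v -row_mul VU row_mul row_diag_mx -scalemxAl -rowE.
have vv : (v *m adjmx v) 0 0 = 1.
  have := congr1 (fun M : 'M[C]_N => M k0 k0) VV; rewrite /= [in RHS]mxE eqxx mulr1n => <-.
  by rewrite !mxE; apply: eq_bigr => j _; rewrite !mxE.
have v0 : v != 0.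
  by apply: contra_neq (@oner_neq0 C) => v0; rewrite -vv v0 mul0mx mxE.
have ll : l * conjc l = 1.
  have : (v *m U) *m adjmx (v *m U) = v *m adjmx v.
    by rewrite adjmxM !mulmxA -(mulmxA v U) hUr mulmx1.
  rewrite vU adjmxZ -scalemxAr -scalemxAl scalerA => /(congr1 (fun M : 'M[C]_1 => M 0 0)).
  by rewrite [X in X = _ -> _]mxE vv mulr1 mulrC.
have [t [ht hc hs]] : exists t, [/\ - pi < t <= pi, cos t = complex.Re l & sin t = complex.Im l].
  apply: arg_exists; have := congr1 (@complex.Re R) ll.
  by rewrite mulrC Re_conj_mul1.
exists t; split; last by rewrite hc.
split => //; apply/eigenvalueP; exists v => //.
suff -> : expi t = l by [].
by rewrite /expi hc hs; case: (l).
Qed.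

End Sec6.

Section Sec7.
Local Open Scope complex_scope.
Variable R : realType.
Local Notation C := R[i].
Local Notation nz v := ((complex.Re v) ^+ 2 + (complex.Im v) ^+ 2).

Lemma cs n (F : 'I_n -> R) : (\sum_a F a) ^+ 2 <= n%:R * \sum_a F a ^+ 2.
Proof.
have E : \sum_a \sum_b (F a - F b) ^+ 2 =
    (n%:R * \sum_a F a ^+ 2) *+ 2 - ((\sum_a F a) ^+ 2) *+ 2.
  transitivity (\sum_a \sum_b (F a ^+ 2 + F b ^+ 2 - (F a * F b) *+ 2)).
    by apply: eq_bigr => a _; apply: eq_bigr => b _; ring.
  rewrite expr2 mulr_suml.
  under eq_bigr => a _ do rewrite !sumrB big_split /= sumr_const card_ord.
  rewrite sumrB big_split /= sumr_const card_ord.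
  congr (_ - _); first by rewrite sumrMnl mulr_natl mulr2n.
  under eq_bigr => a _ do rewrite sumrMnl.
  rewrite sumrMnl; congr (_ *+ _).
  by apply: eq_bigr => a _; rewrite mulr_sumr.
have : 0 <= \sum_a \sum_b (F a - F b) ^+ 2.
  by apply: sumr_ge0 => a _; apply: sumr_ge0 => b _; apply: sqr_ge0.
rewrite E subr_ge0 => h; rewrite -(ler_pMn2r (ltn0Sn 1)) //.
Qed.

Lemma ImD (x y : C) : complex.Im (x + y) = complex.Im x + complex.Im y.
Proof. by case: x => a b; case: y => c d. Qed.

Lemma Im_sum I (r : seq I) (F : I -> C) :
  complex.Im (\sum_(i <- r) F i) = \sum_(i <- r) complex.Im (F i).
Proof. by apply: (big_morph _ ImD). Qed.

End Sec7.

Section Sec8.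
Local Open Scope complex_scope.
Variable R : realType.
Local Notation C := R[i].
Local Notation nz v := ((complex.Re v) ^+ 2 + (complex.Im v) ^+ 2).

Lemma Re_sumP I (r : seq I) (P : pred I) (F : I -> C) :
  complex.Re (\sum_(i <- r | P i) F i) = \sum_(i <- r | P i) complex.Re (F i).
Proof. by apply: (big_morph _ (@ReD R)). Qed.

Lemma Re_mul_conj (v : C) : complex.Re (v * conjc v) = nz v.
Proof. by case: v => a b /=; ring. Qed.

Lemma nz_ge0 (z : C) : 0 <= nz z.
Proof. by rewrite addr_ge0 // sqr_ge0. Qed.

Lemma normc2 (z : C) : Normc.normc z ^+ 2 = nz z.
Proof. by case: z => a b /=; rewrite sqr_sqrtr // addr_ge0 // sqr_ge0. Qed.

Lemma nz_sum n (z : 'I_n -> C) : nz (\sum_a z a) <= n%:R * \sum_a nz (z a).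
Proof.
rewrite Re_sum Im_sum big_split /= mulrDr.
by apply: lerD; apply: cs.
Qed.

Lemma S_bound n d (K : 'I_d -> 'M[C]_n) :
  \sum_(j < d) adjmx (K j) *m K j = 1%:M ->
  \sum_(j < d) nz (\tr (K j)) <= n%:R ^+ 2.
Proof.
move=> hK.
have col a : \sum_j \sum_c nz (K j c a) = 1.
  have := congr1 (fun M : 'M[C]_n => complex.Re (M a a)) hK.
  rewrite /= summxE [in RHS]mxE eqxx /= Re_sum => <-.
  apply: eq_bigr => j _; rewrite mxE Re_sum; apply: eq_bigr => c _.
  by rewrite !mxE Re_conj_mul1.
apply: (@le_trans _ _ (\sum_j n%:R * \sum_a \sum_c nz (K j c a))).
  apply: ler_sum => j _; rewrite /mxtrace; apply: le_trans (@nz_sum n (fun a => K j a a)) _.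
  apply: ler_wpM2l; first exact: ler0n.
  apply: ler_sum => a _; rewrite (bigD1 a) //= lerDl.
  by apply: sumr_ge0 => c _; apply: nz_ge0.
rewrite -mulr_sumr expr2; apply: ler_wpM2l; first exact: ler0n.
rewrite exchange_big /=.
under eq_bigr => a _ do rewrite col.
by rewrite sumr_const card_ord.
Qed.

End Sec8.

Theorem theorem2 (R : realType) (n d : nat) (K : 'I_d -> 'M[R[i]]_n) :
  (0 < n)%N ->
  \sum_(j < d) adjmx (K j) *m K j = 1%:M ->
  ((acos (n%:R^-1 * Num.sqrt (\sum_(j < d) Normc.normc (\tr (K j)) ^+ 2)))%:E
     <= channel_cost (kraus_channel K))%E.
Proof.
move=> n0 hK.
set S := \sum_j _.
have hS : S = \sum_j ((complex.Re (\tr (K j))) ^+ 2 + (complex.Im (\tr (K j))) ^+ 2).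
  by apply: eq_bigr => j _; rewrite normc2.
have S0 : 0 <= S by rewrite hS; apply: sumr_ge0 => j _; apply: nz_ge0.
have Sle : S <= n%:R ^+ 2 by rewrite hS; apply: S_bound.
have npos : (0 : R) < n%:R by rewrite ltr0n.
set x := n%:R^-1 * Num.sqrt S.
have x0 : 0 <= x by rewrite mulr_ge0 // invr_ge0 ltW.
have x1 : x <= 1.
  rewrite /x ler_pdivrMl // mulr1.
  have -> : (n%:R : R) = Num.sqrt (n%:R ^+ 2) by rewrite sqrtr_sqr ger0_norm // ltW.
  exact: ler_wsqrtr.
have hx : -1 <= x <= 1 by apply/andP; split => //; apply: le_trans x0; rewrite lerN10.
have [/andP[hA0 hApi] hA3] := acos_def hx.
apply: le_ereal_inf_tmp => _ [m [U [hdil ->]]].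
have [t [[ht heig] hle]] :=
  @spectral_bound R _ n U (fun a => mxtens_index ((0 : 'I_m.+1), a)) n0 hdil.1.
have hT : (complex.Re (\sum_a U (mxtens_index ((0 : 'I_m.+1), a)) (mxtens_index ((0 : 'I_m.+1), a)))) ^+ 2 <= S.
  have E1 : S = complex.Re (\sum_j \tr (K j) * conjc (\tr (K j))).
    by rewrite hS Re_sum; apply: eq_bigr => j _; rewrite Re_mul_conj.
  rewrite E1 (@trace_identity R n m d K U hdil) (bigD1 0) //= ReD [X in _ <= _ + X]Re_sumP.
  rewrite Re_mul_conj -addrA lerDl addr_ge0 ?sqr_ge0 //.
  by apply: sumr_ge0 => c _; rewrite Re_mul_conj; apply: nz_ge0.
have hcos : cos t <= x.
  rewrite /x ler_pdivlMl //; apply: le_trans hle _.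
  apply: le_trans (real_ler_norm _) _; first exact: num_real.
  by rewrite -sqrtr_sqr; apply: ler_wsqrtr.
rewrite /unitary_cost; apply: (@le_trans _ _ (`|t|)%:E); last first.
  by apply: ereal_sup_ubound; exists t.
rewrite lee_fin leNgt; apply/negP => hlt.
have htpi : `|t| <= pi.
  rewrite ler_norml; case/andP: ht => ht1 ->; rewrite andbT ltW //.
have := hlt; rewrite -(@ltr_cos R); last 2 first.
- by rewrite in_itv /= normr_ge0 htpi.
- by rewrite in_itv /= hA0 hApi.
by rewrite hA3 cos_norm; apply/negP; rewrite -leNgt.
Qed.
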